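(* Let $\Gamma$ be a distance-regular graph with diameter $D\ge 3$, and let $\sigma_0,\dots,\sigma_D$ and $\rho_0,\dots,\rho_D$ be pseudo cosine sequences of $\Gamma$, with $\sigma=\sigma_1$, $\rho=\rho_1$. Then $$(\sigma-\rho)\sum_{h=0}^{i}k_h\sigma_h\rho_h=\frac{b_1b_2\cdots b_i}{c_1c_2\cdots c_i}\,(\sigma_{i+1}\rho_i-\sigma_i\rho_{i+1})\qquad(0\le i\le D-1).$$
   Context: $\Gamma$ is a finite connected undirected graph without loops or multiple edges, distance-regular with diameter $D$, intersection numbers $a_i,b_i,c_i$ ($c_0=0$, $b_D=0$), valency $k=b_0$, $c_i+a_i+b_i=k$, and $k_h=\frac{b_0b_1\cdots b_{h-1}}{c_1c_2\cdots c_h}$ (the number of vertices at distance $h$ from a given vertex). For $\theta\in\mathbb{R}$ the pseudo cosine sequence for $\theta$ is the sequence of reals $\sigma_0,\dots,\sigma_D$ with $\sigma_0=1$ and $c_i\sigma_{i-1}+a_i\sigma_i+b_i\sigma_{i+1}=\theta\sigma_i$ for $0\le i\le D-1$; then $\theta=k\sigma_1$. *)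

(* Defs.v *)
From mathcomp Require Import all_boot all_order all_algebra.
Set Implicit Arguments. Unset Strict Implicit. Unset Printing Implicit Defensive.
Import Order.TTheory GRing.Theory Num.Theory.

Definition simple_graph (T : finType) (e : rel T) : Prop :=
  symmetric e /\ irreflexive e.

Fixpoint ball (T : finType) (e : rel T) (n : nat) (x : T) : {set T} :=
  match n with
  | 0 => [set x]
  | n'.+1 => ball e n' x :|: [set z | [exists y in ball e n' x, e y z]]
  end.

(* Path distance: least n with y in ball n x (meaningful when the graph is
   connected, since then n < #|T|). *)
Definition dist (T : finType) (e : rel T) (x y : T) : nat :=
  find (fun n => y \in ball e n x) (iota 0 #|T|).

Definition distance_regular (T : finType) (e : rel T) (D : nat)
    (a b c : nat -> nat) : Prop :=
  [/\ simple_graph e,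
      (forall x y, connect e x y),
      (forall x y, dist e x y <= D),
      (exists x y, dist e x y = D) &
      (forall x y, let i := dist e x y in
         [/\ c i = #|[set z | e y z & (i > 0) && (dist e x z == i.-1)]|,
             a i = #|[set z | e y z & dist e x z == i]| &
             b i = #|[set z | e y z & dist e x z == i.+1]| ])].

Local Open Scope ring_scope.

Definition kh (R : realFieldType) (b c : nat -> nat) (h : nat) : R :=
  (\prod_(0 <= j < h) (b j)%:R) / (\prod_(1 <= j < h.+1) (c j)%:R).

(* sigma is a pseudo cosine sequence for theta: sigma_0 = 1 and
   c_i sigma_{i-1} + a_i sigma_i + b_i sigma_{i+1} = theta sigma_i for
   0 <= i <= D-1 (the term c_0 sigma_{-1} vanishes as c_0 = 0). *)
Definition pseudo_cosine_seq (R : realFieldType) (D : nat) (a b c : nat -> nat)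
    (theta : R) (sigma : nat -> R) : Prop :=
  sigma 0%N = 1 /\
  forall i : nat, (i < D)%N ->
    (c i)%:R * sigma i.-1 + (a i)%:R * sigma i + (b i)%:R * sigma i.+1
      = theta * sigma i.

Definition is_pseudo_cosine_seq (R : realFieldType) (D : nat)
    (a b c : nat -> nat) (sigma : nat -> R) : Prop :=
  exists theta : R, pseudo_cosine_seq D a b c theta sigma.

(* Main.v *)
Require Import Defs.
From mathcomp Require Import all_boot all_order all_algebra.
From mathcomp Require Import ring.
Import Order.TTheory GRing.Theory Num.Theory.
Local Open Scope ring_scope.
Set Implicit Arguments. Unset Strict Implicit.

Section Graph.
Variables (T : finType) (e : rel T).

Lemma ball_step n x z y : z \in ball e n x -> e z y -> y \in ball e n.+1 x.
Proof.
move=> zb ezy /=; rewrite in_setU; apply/orP; right.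
by rewrite inE; apply/existsP; exists z; rewrite zb.
Qed.

Lemma ball_mono m n x : (m <= n)%N -> ball e m x \subset ball e n x.
Proof.
move=> /subnK <-; elim: (n - m)%N => [|d IH] //=.
by apply: subset_trans IH (subsetUl _ _).
Qed.

Lemma path_ball p x0 n x : path e x0 p -> x0 \in ball e n x ->
  last x0 p \in ball e (n + size p) x.
Proof.
elim: p x0 n => [|y p IH] x0 n /=; first by rewrite addn0.
move=> /andP [exy pp] xb; rewrite addnS -addSn.
by apply: IH => //; apply: ball_step xb exy.
Qed.

Lemma dist_le x y n : (n < #|T|)%N -> y \in ball e n x -> (dist e x y <= n)%N.
Proof.
move=> nT yb; rewrite /dist; case: leqP => // H.
have := @before_find _ 0%N (fun n => y \in ball e n x) (iota 0 #|T|) n H.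
by rewrite nth_iota // add0n yb.
Qed.

Lemma dist_ball x y : (dist e x y < #|T|)%N -> y \in ball e (dist e x y) x.
Proof.
move=> H; have Hs : (find (fun n => y \in ball e n x) (iota 0 #|T|) < size (iota 0 #|T|))%N.
  by rewrite size_iota.
rewrite -has_find in Hs.
have := nth_find 0%N Hs; rewrite nth_iota //.
Qed.

Lemma dist_notball x y m : (m < dist e x y)%N -> y \notin ball e m x.
Proof.
move=> H; have := @before_find _ 0%N (fun n => y \in ball e n x) (iota 0 #|T|) m H.
have Hs : (m < #|T|)%N.
  apply: leq_trans H _; rewrite /dist.
  by have := find_size (fun n => y \in ball e n x) (iota 0 #|T|); rewrite size_iota.
by rewrite nth_iota // add0n => ->.
Qed.

Hypothesis esym : symmetric e.

Lemma dist_descent x y n : dist e x y = n.+1 -> (n.+1 < #|T|)%N ->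
  exists z, e y z /\ dist e x z = n.
Proof.
move=> dxy nT.
have yb : y \in ball e n.+1 x by rewrite -dxy; apply: dist_ball; rewrite dxy.
have ynb : y \notin ball e n x by apply: dist_notball; rewrite dxy.
move: yb => /=; rewrite in_setU (negbTE ynb) /= inE => /existsP [z /andP [zb ezy]].
exists z; split; first by rewrite esym.
have nT' : (n < #|T|)%N by apply: ltnW.
have dz := dist_le nT' zb.
apply/eqP; rewrite eqn_leq dz /=; case: leqP => // Hlt.
have dzT : (dist e x z < #|T|)%N by apply: leq_ltn_trans dz _.
have H1 := ball_step (dist_ball dzT) ezy.
by rewrite (subsetP (ball_mono x Hlt) _ H1) in ynb.
Qed.

End Graph.

Lemma c_pos (T : finType) (e : rel T) (D : nat) (a b c : nat -> nat) :
  distance_regular e D a b c -> forall j, (0 < j <= D)%N -> (0 < c j)%N.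
Proof.
case=> [[esym eirr] conn _ [x [y dxy]] reg].
have DT : (D < #|T|)%N.
  have := conn x y; case/connectP => p pp ly.
  move: ly; case: (shortenP pp) => p' pp' up' _ ly'.
  have yb := path_ball pp' (x0:=x) (n:=0) (x:=x).
  have xb : x \in ball e 0 x by rewrite /= inE.
  have := yb xb; rewrite add0n -ly' => yb'.
  have szT : (size (x :: p') <= #|T|)%N.
    by rewrite -(card_uniqP up'); apply: max_card.
  have := dist_le (n := size p') (y := y) (x := x) szT yb'.
  by rewrite dxy => h; apply: leq_ltn_trans h szT.
have ex : forall d n, (n + d = D)%N -> exists w, dist e x w = n.
  elim=> [|d IH] n hn; first by exists y; rewrite dxy -hn addn0.
  have [w hw] : exists w, dist e x w = n.+1 by apply: IH; rewrite addSn -addnS.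
  have hT : (n.+1 < #|T|)%N by apply: leq_ltn_trans DT; rewrite -hn addnS ltnS leq_addr.
  by have [z [_ hz]] := dist_descent esym hw hT; exists z.
move=> j /andP [j0 jD].
have [w hw] := ex (D - j)%N j (subnKC jD).
case: j j0 jD hw => // j _ jD hw.
have hT : (j.+1 < #|T|)%N by apply: leq_ltn_trans DT.
have [z [ewz hz]] := dist_descent esym hw hT.
have [hc _ _] := reg x w; rewrite hw in hc; rewrite hc card_gt0.
apply/set0Pn; exists z; by rewrite inE ewz hz /=.
Qed.

Lemma ca0 (T : finType) (e : rel T) (D : nat) (a b c : nat -> nat) :
  distance_regular e D a b c -> c 0%N = 0%N /\ a 0%N = 0%N.
Proof.
case=> [[esym eirr] conn _ [x [y dxy]] reg].
have xT : (0 < #|T|)%N by apply/card_gt0P; exists x.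
have dxx : dist e x x = 0%N.
  by apply/eqP; rewrite -leqn0; apply: dist_le => //=; rewrite inE.
have [hc ha _] := reg x x; rewrite dxx in hc ha.
split.
  by rewrite hc; apply/eqP; rewrite cards_eq0; apply/eqP/setP => z; rewrite !inE andbF.
rewrite ha; apply/eqP; rewrite cards_eq0; apply/eqP/setP => z; rewrite !inE.
apply/negP => /andP [exz /eqP dz].
have := @dist_ball T e x z; rewrite dz => /(_ xT); rewrite /= inE => /eqP zx.
by rewrite zx eirr in exz.
Qed.

Theorem lemma3p2 (R : realFieldType) (T : finType) (e : rel T) (D : nat)
    (a b c : nat -> nat) (sigma rho : nat -> R) :
  distance_regular e D a b c -> (3 <= D)%N ->
  is_pseudo_cosine_seq D a b c sigma ->
  is_pseudo_cosine_seq D a b c rho ->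
  forall i : nat, (i <= D.-1)%N ->
    (sigma 1%N - rho 1%N) * (\sum_(0 <= h < i.+1) kh R b c h * sigma h * rho h)
    = (\prod_(1 <= j < i.+1) (b j)%:R) / (\prod_(1 <= j < i.+1) (c j)%:R)
      * (sigma i.+1 * rho i - sigma i * rho i.+1).
Proof.
move=> DR D3 [th [s0 Hs]] [th' [r0 Hr]].
have hc := c_pos DR; have [c0 a0] := ca0 DR.
have D0 : (0 < D)%N by apply: leq_trans D3.
have thE : th = (b 0%N)%:R * sigma 1%N.
  have := Hs 0%N D0; rewrite c0 a0 s0 !mul0r !add0r mulr1 => <-; done.
have th'E : th' = (b 0%N)%:R * rho 1%N.
  have := Hr 0%N D0; rewrite c0 a0 r0 !mul0r !add0r mulr1 => <-; done.
have cnz : forall j, (0 < j <= D)%N -> (c j)%:R != 0 :> R.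
  by move=> j hj; rewrite pnatr_eq0 -lt0n hc.
elim=> [|i IH] hi.
  by rewrite big_nat1 !big_geq // /kh !big_geq // s0 r0 !divr1 !mulr1 !mul1r.
have hi' : (i <= D.-1)%N by apply: ltnW.
have iD : (i.+1 < D)%N by rewrite -ltn_predRL.
have Cnz : \prod_(1 <= j < i.+1) (c j)%:R != 0 :> R.
  rewrite prodf_seq_neq0; apply/allP => j; rewrite mem_index_iota => /andP [j1 ji].
  apply/implyP => _; apply: cnz; rewrite j1 /=; by apply: leq_trans (ltnW iD); apply: ltnW.
have c1nz : (c i.+1)%:R != 0 :> R by apply: cnz; rewrite /= ltnW.
set B := (\prod_(1 <= j < i.+1) (b j)%:R : R).
set C := (\prod_(1 <= j < i.+1) (c j)%:R : R).
have k1 : kh R b c i.+1 = (b 0%N)%:R * B / (C * (c i.+1)%:R).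
  rewrite /kh [X in X / _]big_ltn // [X in _ / X]big_nat_recr //= mulrA.
have PB : \prod_(1 <= j < i.+2) (b j)%:R = B * (b i.+1)%:R :> R by rewrite big_nat_recr.
have PC : \prod_(1 <= j < i.+2) (c j)%:R = C * (c i.+1)%:R :> R by rewrite big_nat_recr.
have E : (b i.+1)%:R * (sigma i.+2 * rho i.+1 - sigma i.+1 * rho i.+2)
   = (c i.+1)%:R * (sigma i.+1 * rho i - sigma i * rho i.+1)
     + (b 0%N)%:R * (sigma 1%N - rho 1%N) * sigma i.+1 * rho i.+1.
  have := Hs i.+1 iD; have := Hr i.+1 iD; rewrite /= thE th'E => Er Es.
  have -> : (b i.+1)%:R * (sigma i.+2 * rho i.+1 - sigma i.+1 * rho i.+2)
     = rho i.+1 * ((b i.+1)%:R * sigma i.+2) - sigma i.+1 * ((b i.+1)%:R * rho i.+2) by ring.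
  have -> : (b i.+1)%:R * sigma i.+2 = (b 0%N)%:R * sigma 1%N * sigma i.+1
     - (c i.+1)%:R * sigma i - (a i.+1)%:R * sigma i.+1 by rewrite -Es; ring.
  have -> : (b i.+1)%:R * rho i.+2 = (b 0%N)%:R * rho 1%N * rho i.+1
     - (c i.+1)%:R * rho i - (a i.+1)%:R * rho i.+1 by rewrite -Er; ring.
  ring.
rewrite [X in _ * X = _]big_nat_recr //= mulrDr IH; last exact: hi'.
rewrite k1 PB PC -/B -/C.
apply: (@etrans _ _ (B / (C * (c i.+1)%:R) * ((b i.+1)%:R * (sigma i.+2 * rho i.+1 - sigma i.+1 * rho i.+2)))); last by ring.
rewrite E.
field.
by rewrite c1nz Cnz.
Qed.
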